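(* Let $\alpha(s)=(x(s),0,y(s),0)$, $s\in I$, be a smooth unit-speed curve in $\mathbb{E}^4$ ($x'^2+y'^2=1$) with $x^2+y^2>0$ on the open interval $I$, and let $M$ be the rotation surface $$X(s,t)=\big(x(s)\cos t,\ x(s)\sin t,\ y(s)\cos t,\ y(s)\sin t\big).$$ Assume $M$ is flat (its Gaussian curvature vanishes identically). Then $M$ has pointwise 1-type Gauss map if and only if either $M$ is totally geodesic (an open part of a plane), or $M$ is parametrized by $$X(s,t)=\big(\lambda\cos(b_0s+d)\cos t,\ \lambda\cos(b_0s+d)\sin t,\ \lambda\sin(b_0s+d)\cos t,\ \lambda\sin(b_0s+d)\sin t\big),\qquad b_0^2\lambda^2=1,$$ for some real constants $b_0,\lambda,d$.
   Context: Gauss map: with the orthonormal tangent frame $e_1=\frac{1}{\sqrt{x^2+y^2}}\partial_t$, $e_2=\partial_s$, the Gauss map is $G=e_1\wedge e_2: M\to \Lambda^2\mathbb{E}^4\cong\mathbb{E}^6$ (with the standard inner product $\langle u_1\wedge u_2,v_1\wedge v_2\rangle=\det(\langle u_i,v_j\rangle)$). The Laplacian of a (vector-valued) function $F$ on $M$ is $\Delta F=-\sum_{i=1}^2\big(\tilde\nabla_{e_i}\tilde\nabla_{e_i}F-\tilde\nabla_{\nabla_{e_i}e_i}F\big)$, where $\tilde\nabla$ is the Euclidean connection and $\nabla$ the induced (Levi-Civita) connection of $M$. $M$ has pointwise 1-type Gauss map if $\Delta G=f(G+C)$ for some smooth function $f$ on $M$ and some constant vector $C\in\Lambda^2\mathbb{E}^4$.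 *)

(* Defs.v *)
From Stdlib Require Import Reals Lra ClassicalEpsilon.
Open Scope R_scope.

(** Derivative of a real function (the value of the limit when it exists,
    an unspecified real otherwise). *)
Definition Dv (f : R -> R) (x : R) : R :=
  epsilon (inhabits 0) (fun l => derivable_pt_lim f x l).

Definition is_open_interval (I : R -> Prop) : Prop :=
  (exists s, I s) /\
  (forall a b c, I a -> I c -> a <= b <= c -> I b) /\
  (forall s, I s -> exists eps, 0 < eps /\ forall u, Rabs (u - s) < eps -> I u).

Definition smooth1 (I : R -> Prop) (f : R -> R) : Prop :=
  exists F : nat -> R -> R, F O = f /\
    forall n s, I s -> derivable_pt_lim (F n) s (F (S n) s).

Definition cont2 (g : R -> R -> R) (s t : R) : Prop :=
  forall eps, 0 < eps -> exists del, 0 < del /\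
    forall u v, Rabs (u - s) < del -> Rabs (v - t) < del ->
      Rabs (g u v - g s t) < eps.

Definition smooth2 (I : R -> Prop) (f : R -> R -> R) : Prop :=
  exists F : nat -> nat -> R -> R -> R, F O O = f /\
    forall i j s t, I s ->
      derivable_pt_lim (fun u => F i j u t) s (F (S i) j s t) /\
      derivable_pt_lim (fun v => F i j s v) t (F i (S j) s t) /\
      cont2 (F i j) s t.

(** * Vectors: a vector of E^n is a function [nat -> R] (components 0..n-1). *)
Definition Vec := nat -> R.
(** A vector field along the surface: a function of the parameters (s,t). *)
Definition VF := R -> R -> Vec.

Definition inner4 (u v : Vec) : R :=
  u 0%nat * v 0%nat + u 1%nat * v 1%nat + u 2%nat * v 2%nat + u 3%nat * v 3%nat.

Definition ds (F : VF) : VF := fun s t i => Dv (fun u => F u t i) s.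
Definition dt (F : VF) : VF := fun s t i => Dv (fun v => F s v i) t.

Definition rotsurf (x y : R -> R) : VF := fun s t i =>
  match i with
  | 0%nat => x s * cos t
  | 1%nat => x s * sin t
  | 2%nat => y s * cos t
  | 3%nat => y s * sin t
  | _ => 0
  end.

Definition rr (x y : R -> R) (s : R) : R := sqrt (x s ^ 2 + y s ^ 2).

(** Orthonormal frame: e1 = (1/sqrt(x^2+y^2)) d_t (frame index 0),
    e2 = d_s (frame index 1). *)
Definition frame (x y : R -> R) (k : nat) : VF :=
  match k with
  | 0%nat => fun s t i => / rr x y s * dt (rotsurf x y) s t i
  | _ => ds (rotsurf x y)
  end.

(** Euclidean derivative  ~nabla_{e_k} F  of an (R^n-valued) field along M. *)
Definition Dir (x y : R -> R) (k : nat) (F : VF) : VF :=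
  match k with
  | 0%nat => fun s t i => / rr x y s * dt F s t i
  | _ => ds F
  end.

Definition Dee (x y : R -> R) (k l : nat) : VF := Dir x y k (frame x y l).

(** Second fundamental form h(e_k,e_l) = normal part of ~nabla_{e_k} e_l,
    i.e. ~nabla_{e_k} e_l - nabla_{e_k} e_l with
    nabla_{e_k} e_l = sum_m <~nabla_{e_k} e_l, e_m> e_m. *)
Definition sff (x y : R -> R) (k l : nat) : VF := fun s t i =>
  Dee x y k l s t i
  - inner4 (Dee x y k l s t) (frame x y 0 s t) * frame x y 0 s t i
  - inner4 (Dee x y k l s t) (frame x y 1 s t) * frame x y 1 s t i.

(** Gaussian curvature (Gauss equation):
    K = <h(e1,e1),h(e2,e2)> - <h(e1,e2),h(e1,e2)>. *)
Definition gauss_curv (x y : R -> R) (s t : R) : R :=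
  inner4 (sff x y 0 0 s t) (sff x y 1 1 s t)
  - inner4 (sff x y 0 1 s t) (sff x y 0 1 s t).

Definition totally_geodesic (I : R -> Prop) (x y : R -> R) : Prop :=
  forall s t, I s -> forall k l i, (k < 2)%nat -> (l < 2)%nat -> (i < 4)%nat ->
    sff x y k l s t i = 0.

(** * Gauss map G = e1 /\ e2 in Lambda^2 E^4 = E^6, in the orthonormal basis
    e_0/\e_1, e_0/\e_2, e_0/\e_3, e_1/\e_2, e_1/\e_3, e_2/\e_3
    (orthonormal for <u1/\u2, v1/\v2> = det(<u_i,v_j>)). *)
Definition wedge (u v : Vec) : Vec := fun i =>
  let w a b := u a * v b - u b * v a in
  match i with
  | 0%nat => w 0%nat 1%nat
  | 1%nat => w 0%nat 2%nat
  | 2%nat => w 0%nat 3%nat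
  | 3%nat => w 1%nat 2%nat
  | 4%nat => w 1%nat 3%nat
  | 5%nat => w 2%nat 3%nat
  | _ => 0
  end.

Definition gauss_map (x y : R -> R) : VF := fun s t =>
  wedge (frame x y 0 s t) (frame x y 1 s t).

(** Laplacian  Delta F = - sum_k ( ~nabla_{e_k} ~nabla_{e_k} F
                                    - ~nabla_{nabla_{e_k} e_k} F ),
    with nabla_{e_k} e_k = sum_m <~nabla_{e_k} e_k, e_m> e_m. *)
Definition lap (x y : R -> R) (F : VF) : VF := fun s t i =>
  - ( (Dir x y 0 (Dir x y 0 F) s t i
        - ( inner4 (Dee x y 0 0 s t) (frame x y 0 s t) * Dir x y 0 F s t i
          + inner4 (Dee x y 0 0 s t) (frame x y 1 s t) * Dir x y 1 F s t i))
    + (Dir x y 1 (Dir x y 1 F) s t i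
        - ( inner4 (Dee x y 1 1 s t) (frame x y 0 s t) * Dir x y 0 F s t i
          + inner4 (Dee x y 1 1 s t) (frame x y 1 s t) * Dir x y 1 F s t i))).

(** Pointwise 1-type Gauss map: Delta G = f (G + C) for a smooth function f
    on M (as a function of the parameters (s,t) in I x R) and a constant
    vector C in Lambda^2 E^4 = E^6. *)
Definition pointwise_1type (I : R -> Prop) (x y : R -> R) : Prop :=
  exists (f : R -> R -> R) (C : Vec), smooth2 I f /\
    forall s t, I s -> forall i, (i < 6)%nat ->
      lap x y (gauss_map x y) s t i = f s t * (gauss_map x y s t i + C i).

(* Main.v *)
Require Import Defs.
From Stdlib Require Import Reals Lra Lia ClassicalEpsilon FunctionalExtensionality Nsatz.
Open Scope R_scope.

Notation dpl := derivable_pt_lim.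

Lemma Deq f s l l' : dpl f s l -> l = l' -> dpl f s l'.
Proof. intros H ->; exact H. Qed.

Lemma Dext f g s l : (forall u, f u = g u) -> dpl g s l -> dpl f s l.
Proof. intros H D. replace f with g; [exact D|]. extensionality u; now rewrite H. Qed.

Lemma Dloc f g s l : (exists eps, 0 < eps /\ forall u, Rabs (u - s) < eps -> f u = g u) ->
  dpl g s l -> dpl f s l.
Proof.
  intros [eps [He H]] D e He'. destruct (D e He') as [[d Hd] Hd2].
  assert (Hm : 0 < Rmin d eps) by (apply Rmin_pos; auto).
  exists (mkposreal _ Hm). intros h Hh0 Hh. simpl in Hh.
  rewrite (H s), (H (s+h)).
  - apply Hd2; auto. apply Rlt_le_trans with (1 := Hh). apply Rmin_l.
  - replace (s + h - s) with h by ring. apply Rlt_le_trans with (1 := Hh). apply Rmin_r.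
  - replace (s - s) with 0 by ring. rewrite Rabs_R0. exact He.
Qed.

Lemma Dv_eq f s l : dpl f s l -> Dv f s = l.
Proof.
  intros H. unfold Dv.
  assert (E : exists l, dpl f s l) by (exists l; exact H).
  pose proof (epsilon_spec (inhabits 0) (fun l => dpl f s l) E) as H2.
  eapply uniqueness_limite; eauto.
Qed.

Lemma Dconst c s : dpl (fun _ => c) s 0.
Proof. apply derivable_pt_lim_const. Qed.
Lemma Did s : dpl (fun u => u) s 1.
Proof. apply derivable_pt_lim_id. Qed.
Lemma Dmul f g s df dg : dpl f s df -> dpl g s dg ->
  dpl (fun u => f u * g u) s (df * g s + f s * dg).
Proof. intros; apply (derivable_pt_lim_mult f g); auto. Qed.
Lemma Dadd f g s df dg : dpl f s df -> dpl g s dg ->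
  dpl (fun u => f u + g u) s (df + dg).
Proof. intros; apply (derivable_pt_lim_plus f g); auto. Qed.
Lemma Dsub f g s df dg : dpl f s df -> dpl g s dg ->
  dpl (fun u => f u - g u) s (df - dg).
Proof. intros; apply (derivable_pt_lim_minus f g); auto. Qed.
Lemma Dopp f s df : dpl f s df -> dpl (fun u => - f u) s (- df).
Proof. intros; apply (derivable_pt_lim_opp f); auto. Qed.
Lemma Ddiv f g s df dg : dpl f s df -> dpl g s dg -> g s <> 0 ->
  dpl (fun u => f u / g u) s ((df * g s - dg * f s) / (g s)²).
Proof. intros; apply (derivable_pt_lim_div f g); auto. Qed.
Lemma Dinv f s df : dpl f s df -> f s <> 0 ->
  dpl (fun u => / f u) s (- df / (f s)²).
Proof.
  intros H Hn.
  assert (D := Ddiv (fun _ => 1) f s 0 df (Dconst 1 s) H Hn).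
  eapply Dext. 2: eapply Deq. 2: exact D.
  - intros u. simpl. unfold Rdiv. ring.
  - simpl. field. unfold Rsqr. apply Rmult_integral_contrapositive; auto.
Qed.
Lemma Dsqrt f s df : dpl f s df -> 0 < f s ->
  dpl (fun u => sqrt (f u)) s (df / (2 * sqrt (f s))).
Proof.
  intros H Hp. eapply Deq. apply (derivable_pt_lim_comp f sqrt s df (/ (2 * sqrt (f s)))); auto.
  apply derivable_pt_lim_sqrt; auto. unfold Rdiv. ring.
Qed.
Lemma Dcos f s df : dpl f s df -> dpl (fun u => cos (f u)) s (- sin (f s) * df).
Proof. intros H. apply (derivable_pt_lim_comp f cos); auto. apply derivable_pt_lim_cos. Qed.
Lemma Dsin f s df : dpl f s df -> dpl (fun u => sin (f u)) s (cos (f s) * df).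
Proof. intros H. apply (derivable_pt_lim_comp f sin); auto. apply derivable_pt_lim_sin. Qed.
Lemma Dpow2 f s df : dpl f s df -> dpl (fun u => f u ^ 2) s (2 * f s * df).
Proof. intros H. eapply Dext. 2: eapply Deq. 2: apply (Dmul f f s df df H H).
  intros u; simpl; ring. ring. Qed.
Lemma Dcosid s : dpl cos s (- sin s). Proof. apply derivable_pt_lim_cos. Qed.
Lemma Dsinid s : dpl sin s (cos s). Proof. apply derivable_pt_lim_sin. Qed.

Ltac dstep := first
  [ apply Dconst | apply Did | apply Dcosid | apply Dsinid
  | apply Dmul | apply Dadd | apply Dsub | apply Dopp
  | apply Dpow2 | apply Dcos | apply Dsin ].
Ltac dauto := repeat (first [dstep | eassumption]).

Lemma const_on_I (I : R -> Prop) f f' :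
  is_open_interval I ->
  (forall s, I s -> dpl f s (f' s)) -> (forall s, I s -> f' s = 0) ->
  forall s1 s2, I s1 -> I s2 -> f s1 = f s2.
Proof.
  intros [_ [Hint _]] Hd H0.
  assert (K : forall a b, I a -> I b -> a < b -> f a = f b).
  { intros a b Ha Hb Hab.
    destruct (MVT_cor2 f f' a b Hab) as [c [Hc1 Hc2]].
    - intros c Hc. apply Hd. apply (Hint a c b); auto.
    - rewrite H0 in Hc1. lra. apply (Hint a c b); auto. lra. }
  intros s1 s2 H1 H2. destruct (Rtotal_order s1 s2) as [h|[h|h]].
  - auto.
  - subst; auto.
  - symmetry; auto.
Qed.

Record Setup (I : R -> Prop) (x y x1 y1 x2 y2 : R -> R) : Prop := mkSetup {
  S_int : is_open_interval I;
  S_dx : forall s, I s -> dpl x s (x1 s);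
  S_dy : forall s, I s -> dpl y s (y1 s);
  S_dx1 : forall s, I s -> dpl x1 s (x2 s);
  S_dy1 : forall s, I s -> dpl y1 s (y2 s);
  S_unit : forall s, I s -> x1 s ^ 2 + y1 s ^ 2 = 1;
  S_pos : forall s, I s -> 0 < x s ^ 2 + y s ^ 2 }.

Lemma S_nbhd I x y x1 y1 x2 y2 : Setup I x y x1 y1 x2 y2 -> forall s, I s ->
  exists eps, 0 < eps /\ forall u, Rabs (u - s) < eps -> I u.
Proof. intros S. destruct (S_int _ _ _ _ _ _ _ S) as [_ [_ H]]. exact H. Qed.

Lemma loc_I I x y x1 y1 x2 y2 (f g : R -> R) s : Setup I x y x1 y1 x2 y2 -> I s ->
  (forall u, I u -> f u = g u) -> exists eps, 0 < eps /\ forall u, Rabs (u - s) < eps -> f u = g u.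
Proof.
  intros S Hs H. destruct (S_nbhd _ _ _ _ _ _ _ S s Hs) as [e [He H2]].
  exists e; split; auto.
Qed.

Lemma S_orth I x y x1 y1 x2 y2 : Setup I x y x1 y1 x2 y2 -> forall s, I s ->
  x1 s * x2 s + y1 s * y2 s = 0.
Proof.
  intros S s Hs.
  assert (D : dpl (fun u => x1 u ^ 2 + y1 u ^ 2) s (2 * x1 s * x2 s + 2 * y1 s * y2 s)).
  { apply Dadd; apply Dpow2; [apply (S_dx1 _ _ _ _ _ _ _ S) | apply (S_dy1 _ _ _ _ _ _ _ S)]; auto. }
  assert (D2 : dpl (fun u => x1 u ^ 2 + y1 u ^ 2) s 0).
  { eapply Dloc. 2: apply (Dconst 1). eapply loc_I; eauto.
    intros u Hu. apply (S_unit _ _ _ _ _ _ _ S); auto. }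
  pose proof (uniqueness_limite _ _ _ _ D D2). lra.
Qed.

Definition Xc (x y : R -> R) (i : nat) (s : R) : R :=
  match i with 0%nat | 1%nat => x s | _ => y s end.
Definition Tc (i : nat) (t : R) : R :=
  match i with 0%nat | 2%nat => cos t | _ => sin t end.
Definition Td (i : nat) (t : R) : R :=
  match i with 0%nat | 2%nat => - sin t | _ => cos t end.

Lemma rot_eq x y s t i : (i < 4)%nat -> rotsurf x y s t i = Xc x y i s * Tc i t.
Proof. intros H. do 4 (destruct i as [|i]; [reflexivity|]). lia. Qed.

Lemma dTc i t : dpl (fun v => Tc i v) t (Td i t).
Proof.
  destruct i as [|[|[|i]]]; simpl; try apply Dsinid.
  - apply Dcosid.
  - apply Dcosid.
Qed.
Lemma dTd i t : dpl (fun v => Td i v) t (- Tc i t).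
Proof.
  destruct i as [|[|[|i]]]; simpl.
  - apply Dopp, Dsinid.
  - eapply Deq. apply Dcosid. ring.
  - apply Dopp, Dsinid.
  - eapply Deq. apply Dcosid. ring.
Qed.

Lemma dXc I x y x1 y1 x2 y2 i s : Setup I x y x1 y1 x2 y2 -> I s ->
  dpl (fun u => Xc x y i u) s (Xc x1 y1 i s).
Proof.
  intros S Hs. destruct i as [|[|i]]; simpl.
  1,2: apply (S_dx _ _ _ _ _ _ _ S); auto.
  apply (S_dy _ _ _ _ _ _ _ S); auto.
Qed.
Lemma dXc1 I x y x1 y1 x2 y2 i s : Setup I x y x1 y1 x2 y2 -> I s ->
  dpl (fun u => Xc x1 y1 i u) s (Xc x2 y2 i s).
Proof.
  intros S Hs. destruct i as [|[|i]]; simpl.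
  1,2: apply (S_dx1 _ _ _ _ _ _ _ S); auto.
  apply (S_dy1 _ _ _ _ _ _ _ S); auto.
Qed.

Lemma frame0_eq x y s t i : (i < 4)%nat ->
  frame x y 0 s t i = / rr x y s * (Xc x y i s * Td i t).
Proof.
  intros Hi. simpl. unfold dt. f_equal. apply Dv_eq.
  eapply Dext. intros v. apply rot_eq; auto.
  eapply Deq. apply Dmul. apply Dconst. apply dTc. cbv beta; ring.
Qed.

Lemma frame1_eq I x y x1 y1 x2 y2 s t i : Setup I x y x1 y1 x2 y2 -> I s -> (i < 4)%nat ->
  frame x y 1 s t i = Xc x1 y1 i s * Tc i t.
Proof.
  intros S Hs Hi. simpl. unfold ds. apply Dv_eq.
  eapply Dext. intros v. apply rot_eq; auto.
  eapply Deq. apply Dmul. eapply dXc; eauto. apply Dconst. cbv beta; ring.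
Qed.

Lemma rr_pos I x y x1 y1 x2 y2 s : Setup I x y x1 y1 x2 y2 -> I s -> 0 < rr x y s.
Proof. intros S Hs. unfold rr. apply sqrt_lt_R0. apply (S_pos _ _ _ _ _ _ _ S); auto. Qed.
Lemma rr_sq I x y x1 y1 x2 y2 s : Setup I x y x1 y1 x2 y2 -> I s ->
  rr x y s * rr x y s = x s * x s + y s * y s.
Proof. intros S Hs. unfold rr. rewrite sqrt_sqrt. ring.
  pose proof (S_pos _ _ _ _ _ _ _ S s Hs). simpl in *. lra. Qed.

Lemma drr I x y x1 y1 x2 y2 s : Setup I x y x1 y1 x2 y2 -> I s ->
  dpl (fun u => rr x y u) s ((x s * x1 s + y s * y1 s) / rr x y s).
Proof.
  intros S Hs. unfold rr. eapply Deq. apply Dsqrt.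
  apply Dadd; apply Dpow2; [apply (S_dx _ _ _ _ _ _ _ S) | apply (S_dy _ _ _ _ _ _ _ S)]; auto.
  apply (S_pos _ _ _ _ _ _ _ S); auto.
  cbv beta. field. pose proof (rr_pos _ _ _ _ _ _ _ s S Hs). unfold rr in H. lra.
Qed.

Lemma Dee00_eq x y s t i : (i < 4)%nat ->
  Dee x y 0 0 s t i = / rr x y s * (/ rr x y s * (Xc x y i s * - Tc i t)).
Proof.
  intros Hi. unfold Dee. simpl. f_equal. unfold dt. apply Dv_eq.
  eapply Dext. intros v. apply frame0_eq; auto.
  eapply Deq. apply Dmul. apply Dconst. apply Dmul. apply Dconst. apply dTd. cbv beta; ring.
Qed.

Lemma Dee01_eq I x y x1 y1 x2 y2 s t i : Setup I x y x1 y1 x2 y2 -> I s -> (i < 4)%nat ->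
  Dee x y 0 1 s t i = / rr x y s * (Xc x1 y1 i s * Td i t).
Proof.
  intros S Hs Hi. unfold Dee. simpl. f_equal. unfold dt. apply Dv_eq.
  eapply Dext. intros v. eapply frame1_eq; eauto.
  eapply Deq. apply Dmul. apply Dconst. apply dTc. cbv beta; ring.
Qed.

Lemma Dee10_eq I x y x1 y1 x2 y2 s t i : Setup I x y x1 y1 x2 y2 -> I s -> (i < 4)%nat ->
  Dee x y 1 0 s t i =
  (- ((x s * x1 s + y s * y1 s) / (rr x y s * rr x y s * rr x y s)) * Xc x y i s
   + / rr x y s * Xc x1 y1 i s) * Td i t.
Proof.
  intros S Hs Hi. unfold Dee. simpl. unfold ds. apply Dv_eq.
  eapply Dext. intros v. apply frame0_eq; auto.
  pose proof (rr_pos _ _ _ _ _ _ _ s S Hs).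
  eapply Deq. apply Dmul. apply Dinv. eapply drr; eauto. lra.
  apply Dmul. eapply dXc; eauto. apply Dconst.
  cbv beta. unfold Rsqr. field. lra.
Qed.

Lemma Dee11_eq I x y x1 y1 x2 y2 s t i : Setup I x y x1 y1 x2 y2 -> I s -> (i < 4)%nat ->
  Dee x y 1 1 s t i = Xc x2 y2 i s * Tc i t.
Proof.
  intros S Hs Hi. unfold Dee, Dir, ds. apply Dv_eq.
  apply (Dloc _ (fun u => Xc x1 y1 i u * Tc i t)).
  - eapply loc_I; eauto. intros u Hu. eapply frame1_eq; eauto.
  - eapply Deq. apply Dmul. eapply dXc1; eauto. apply Dconst. cbv beta; ring.
Qed.

Lemma trig1 t : cos t * cos t + sin t * sin t = 1.
Proof. pose proof (sin2_cos2 t). unfold Rsqr in H. lra. Qed.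

Ltac prep I x y x1 y1 x2 y2 s t S Hs :=
  pose proof (rr_pos I x y x1 y1 x2 y2 s S Hs) as Hrp;
  pose proof (rr_sq I x y x1 y1 x2 y2 s S Hs) as Hr;
  pose proof (S_unit I x y x1 y1 x2 y2 S s Hs) as Hu;
  pose proof (S_orth I x y x1 y1 x2 y2 S s Hs) as Ho;
  pose proof (trig1 t) as Ht;
  simpl pow in Hu;
  set (r := rr x y s) in *;
  set (X := x s) in *; set (Y := y s) in *; set (X1 := x1 s) in *; set (Y1 := y1 s) in *;
  set (X2 := x2 s) in *; set (Y2 := y2 s) in *; set (C := cos t) in *; set (Sn := sin t) in *.

Ltac expand I x y x1 y1 x2 y2 s t S Hs :=
  unfold inner4;
  repeat rewrite Dee00_eq by lia;
  repeat rewrite (Dee01_eq I x y x1 y1 x2 y2) by (auto; lia);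
  repeat rewrite (Dee10_eq I x y x1 y1 x2 y2) by (auto; lia);
  repeat rewrite (Dee11_eq I x y x1 y1 x2 y2) by (auto; lia);
  repeat rewrite frame0_eq by lia;
  repeat rewrite (frame1_eq I x y x1 y1 x2 y2) by (auto; lia);
  simpl Xc; simpl Tc; simpl Td;
  prep I x y x1 y1 x2 y2 s t S Hs.

Ltac alg := field_simplify_eq; [simpl pow; nsatz | lra ..].

Lemma in00_1 I x y x1 y1 x2 y2 s t : Setup I x y x1 y1 x2 y2 -> I s ->
  inner4 (Dee x y 0 0 s t) (frame x y 1 s t) =
  - ((x s * x1 s + y s * y1 s) / (rr x y s * rr x y s)).
Proof. intros S Hs. expand I x y x1 y1 x2 y2 s t S Hs. alg. Qed.

Ltac i4 i := do 4 (destruct i as [|i]; [|]); [| | | | lia].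

Lemma sff00_eq I x y x1 y1 x2 y2 s t i : Setup I x y x1 y1 x2 y2 -> I s -> (i < 4)%nat ->
  sff x y 0 0 s t i =
  ((x s * x1 s + y s * y1 s) * Xc x1 y1 i s - Xc x y i s) * Tc i t / (rr x y s * rr x y s).
Proof.
  intros S Hs Hi. unfold sff.
  destruct i as [|[|[|[|i]]]]; try lia; expand I x y x1 y1 x2 y2 s t S Hs; alg.
Qed.

Lemma sff01_eq I x y x1 y1 x2 y2 s t i : Setup I x y x1 y1 x2 y2 -> I s -> (i < 4)%nat ->
  sff x y 0 1 s t i =
  ((x s * x s + y s * y s) * Xc x1 y1 i s - (x s * x1 s + y s * y1 s) * Xc x y i s) * Td i t
    / (rr x y s * rr x y s * rr x y s).
Proof.
  intros S Hs Hi. unfold sff.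
  destruct i as [|[|[|[|i]]]]; try lia; expand I x y x1 y1 x2 y2 s t S Hs; alg.
Qed.

Lemma sff10_eq I x y x1 y1 x2 y2 s t i : Setup I x y x1 y1 x2 y2 -> I s -> (i < 4)%nat ->
  sff x y 1 0 s t i =
  ((x s * x s + y s * y s) * Xc x1 y1 i s - (x s * x1 s + y s * y1 s) * Xc x y i s) * Td i t
    / (rr x y s * rr x y s * rr x y s).
Proof.
  intros S Hs Hi. unfold sff.
  destruct i as [|[|[|[|i]]]]; try lia; expand I x y x1 y1 x2 y2 s t S Hs; alg.
Qed.

Lemma sff11_eq I x y x1 y1 x2 y2 s t i : Setup I x y x1 y1 x2 y2 -> I s -> (i < 4)%nat ->
  sff x y 1 1 s t i = Xc x2 y2 i s * Tc i t.
Proof.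
  intros S Hs Hi. unfold sff.
  destruct i as [|[|[|[|i]]]]; try lia; expand I x y x1 y1 x2 y2 s t S Hs; alg.
Qed.

Lemma gauss_eq I x y x1 y1 x2 y2 s t : Setup I x y x1 y1 x2 y2 -> I s ->
  gauss_curv x y s t =
  - ((x s * x s + y s * y s) * (x s * x2 s + y s * y2 s + 1)
     - (x s * x1 s + y s * y1 s) * (x s * x1 s + y s * y1 s))
    / ((x s * x s + y s * y s) * (x s * x s + y s * y s)).
Proof.
  intros S Hs. unfold gauss_curv, inner4.
  repeat rewrite (sff00_eq I x y x1 y1 x2 y2) by (auto; lia).
  repeat rewrite (sff01_eq I x y x1 y1 x2 y2) by (auto; lia).
  repeat rewrite (sff11_eq I x y x1 y1 x2 y2) by (auto; lia).
  simpl Xc; simpl Tc; simpl Td.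
  prep I x y x1 y1 x2 y2 s t S Hs.
  assert (X * X + Y * Y <> 0) by nra.
  field_simplify_eq; [simpl pow; nsatz | split; [auto|lra]].
Qed.

Lemma flat_id I x y x1 y1 x2 y2 s : Setup I x y x1 y1 x2 y2 -> I s ->
  gauss_curv x y s 0 = 0 ->
  (x s * x s + y s * y s) * (x s * x2 s + y s * y2 s + 1)
     = (x s * x1 s + y s * y1 s) * (x s * x1 s + y s * y1 s).
Proof.
  intros S Hs H. rewrite (gauss_eq I x y x1 y1 x2 y2) in H by auto.
  pose proof (S_pos _ _ _ _ _ _ _ S s Hs). simpl in H0.
  assert (P : 0 < (x s * x s + y s * y s) * (x s * x s + y s * y s)) by nra.
  unfold Rdiv in H. apply Rmult_integral in H. destruct H as [H|H].
  - lra.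
  - pose proof (Rinv_neq_0_compat _ (Rgt_not_eq _ _ P)). contradiction.
Qed.

Lemma kap_x2 a b a1 b1 : a * a + b * b = 1 -> a * a1 + b * b1 = 0 ->
  a1 = - (a * b1 - b * a1) * b.
Proof. intros. nsatz. Qed.
Lemma kap_y2 a b a1 b1 : a * a + b * b = 1 -> a * a1 + b * b1 = 0 ->
  b1 = (a * b1 - b * a1) * a.
Proof. intros. nsatz. Qed.

Lemma S_unit' I x y x1 y1 x2 y2 : Setup I x y x1 y1 x2 y2 -> forall s, I s ->
  x1 s * x1 s + y1 s * y1 s = 1.
Proof. intros S s Hs. pose proof (S_unit _ _ _ _ _ _ _ S s Hs). simpl in H. lra. Qed.
Lemma S_pos' I x y x1 y1 x2 y2 : Setup I x y x1 y1 x2 y2 -> forall s, I s ->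
  0 < x s * x s + y s * y s.
Proof. intros S s Hs. pose proof (S_pos _ _ _ _ _ _ _ S s Hs). simpl in H. lra. Qed.

Lemma Hkappa I x y x1 y1 x2 y2 : Setup I x y x1 y1 x2 y2 ->
  (forall s, I s -> gauss_curv x y s 0 = 0) -> forall s, I s ->
  (x s * x s + y s * y s) * (x1 s * y2 s - y1 s * x2 s) = x s * y1 s - y s * x1 s.
Proof.
  intros S Hf.
  set (g := fun s => (x s * x1 s + y s * y1 s) * (x s * x1 s + y s * y1 s) / (x s * x s + y s * y s)).
  assert (Hg : forall s, I s -> dpl g s 0).
  { intros s Hs. unfold g.
    pose proof (S_pos _ _ _ _ _ _ _ S s Hs) as Hp. simpl in Hp.
    pose proof (flat_id _ _ _ _ _ _ _ s S Hs (Hf s Hs)) as Hfl.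
    pose proof (S_unit _ _ _ _ _ _ _ S s Hs) as Hu. simpl in Hu.
    pose proof (S_dx _ _ _ _ _ _ _ S s Hs). pose proof (S_dy _ _ _ _ _ _ _ S s Hs).
    pose proof (S_dx1 _ _ _ _ _ _ _ S s Hs). pose proof (S_dy1 _ _ _ _ _ _ _ S s Hs).
    eapply Deq. apply Ddiv. dauto. dauto. lra.
    unfold Rsqr. field_simplify_eq. 2: lra.
    set (X := x s) in *; set (Y := y s) in *; set (X1 := x1 s) in *; set (Y1 := y1 s) in *;
    set (X2 := x2 s) in *; set (Y2 := y2 s) in *. simpl pow. clearbody X Y X1 Y1 X2 Y2. clear -Hfl Hu. nsatz. }
  assert (Hc : forall s1 s2, I s1 -> I s2 -> g s1 = g s2).
  { apply (const_on_I I g (fun _ => 0)). apply (S_int _ _ _ _ _ _ _ S). auto. auto. }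
  destruct (S_int _ _ _ _ _ _ _ S) as [[s0 Hs0] _].
  set (A0 := g s0).
  assert (Hw2 : forall s, I s -> (x s * y1 s - y s * x1 s) * (x s * y1 s - y s * x1 s)
                             = (x s * x s + y s * y s) * (1 - A0)).
  { intros s Hs. unfold A0. rewrite <- (Hc s s0 Hs Hs0). unfold g.
    pose proof (S_pos _ _ _ _ _ _ _ S s Hs) as Hp. simpl in Hp.
    pose proof (S_unit _ _ _ _ _ _ _ S s Hs) as Hu. simpl in Hu.
    field_simplify_eq. 2: lra. simpl pow. nsatz. }
  intros s Hs.
  pose proof (S_pos' _ _ _ _ _ _ _ S s Hs) as Hp.
  pose proof (S_unit' _ _ _ _ _ _ _ S s Hs) as Hu.
  pose proof (S_orth _ _ _ _ _ _ _ S s Hs) as Ho.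
  pose proof (flat_id _ _ _ _ _ _ _ s S Hs (Hf s Hs)) as Hfl.
  pose proof (kap_x2 _ _ _ _ Hu Ho) as Ex2. pose proof (kap_y2 _ _ _ _ Hu Ho) as Ey2.
  destruct (Rlt_or_le A0 1) as [HA|HA].
  - assert (Hw : x s * y1 s - y s * x1 s <> 0).
    { intro E. pose proof (Hw2 s Hs). rewrite E in H. nra. }
    apply (Rmult_eq_reg_l (x s * y1 s - y s * x1 s)); auto.
    set (X := x s) in *; set (Y := y s) in *; set (X1 := x1 s) in *; set (Y1 := y1 s) in *;
    set (X2 := x2 s) in *; set (Y2 := y2 s) in *.
    clearbody X Y X1 Y1 X2 Y2. clear -Hfl Hu Ex2 Ey2. nsatz.
  - assert (Hw0 : forall s, I s -> x s * y1 s - y s * x1 s = 0).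
    { intros s' Hs'. pose proof (Hw2 s' Hs'). pose proof (S_pos _ _ _ _ _ _ _ S s' Hs').
      simpl in *. nra. }
    assert (D1 : dpl (fun u => x u * y1 u - y u * x1 u) s (x1 s * y1 s + x s * y2 s - (y1 s * x1 s + y s * x2 s))).
    { pose proof (S_dx _ _ _ _ _ _ _ S s Hs). pose proof (S_dy _ _ _ _ _ _ _ S s Hs).
      pose proof (S_dx1 _ _ _ _ _ _ _ S s Hs). pose proof (S_dy1 _ _ _ _ _ _ _ S s Hs).
      eapply Deq. dauto. ring. }
    assert (D2 : dpl (fun u => x u * y1 u - y u * x1 u) s 0).
    { apply (Dloc _ (fun _ => 0)). eapply loc_I; eauto. apply Dconst. }
    pose proof (uniqueness_limite _ _ _ _ D1 D2) as E.
    pose proof (Hw0 s Hs) as W.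
    assert (Hk : (x1 s * y2 s - y1 s * x2 s) * (x s * x1 s + y s * y1 s) = 0).
    { set (X := x s) in *; set (Y := y s) in *; set (X1 := x1 s) in *; set (Y1 := y1 s) in *;
      set (X2 := x2 s) in *; set (Y2 := y2 s) in *.
      clearbody X Y X1 Y1 X2 Y2. clear -E Ex2 Ey2. nsatz. }
    assert (Hu2 : (x s * x1 s + y s * y1 s) * (x s * x1 s + y s * y1 s) = x s * x s + y s * y s).
    { set (X := x s) in *; set (Y := y s) in *; set (X1 := x1 s) in *; set (Y1 := y1 s) in *.
      clearbody X Y X1 Y1. clear -W Hu. nsatz. }
    apply Rmult_integral in Hk. destruct Hk as [Hk|Hk].
    + rewrite Hk, W. ring.
    + rewrite Hk in Hu2. lra.
Qed.

Lemma in00_0 I x y x1 y1 x2 y2 s t : Setup I x y x1 y1 x2 y2 -> I s ->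
  inner4 (Dee x y 0 0 s t) (frame x y 0 s t) = 0.
Proof. intros S Hs. expand I x y x1 y1 x2 y2 s t S Hs. alg. Qed.
Lemma in11_0 I x y x1 y1 x2 y2 s t : Setup I x y x1 y1 x2 y2 -> I s ->
  inner4 (Dee x y 1 1 s t) (frame x y 0 s t) = 0.
Proof. intros S Hs. expand I x y x1 y1 x2 y2 s t S Hs. alg. Qed.
Lemma in11_1 I x y x1 y1 x2 y2 s t : Setup I x y x1 y1 x2 y2 -> I s ->
  inner4 (Dee x y 1 1 s t) (frame x y 1 s t) = 0.
Proof. intros S Hs. expand I x y x1 y1 x2 y2 s t S Hs. alg. Qed.

Lemma dcos2 B D v :
  dpl (fun w => B + D * cos (2 * w)) v (- 2 * D * sin (2 * v)).
Proof. eapply Deq. dauto. cbv beta. ring. Qed.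

Lemma lap_gen I x y x1 y1 x2 y2 i A A1 A2 B B1 B2 D D1 D2 :
  Setup I x y x1 y1 x2 y2 ->
  (forall s t, I s -> gauss_map x y s t i = A s + B s * cos (2 * t) + D s * sin (2 * t)) ->
  (forall s, I s -> dpl A s (A1 s)) -> (forall s, I s -> dpl A1 s (A2 s)) ->
  (forall s, I s -> dpl B s (B1 s)) -> (forall s, I s -> dpl B1 s (B2 s)) ->
  (forall s, I s -> dpl D s (D1 s)) -> (forall s, I s -> dpl D1 s (D2 s)) ->
  forall s t, I s -> lap x y (gauss_map x y) s t i =
   - ( (-4 * (B s * cos (2 * t) + D s * sin (2 * t))) / (rr x y s * rr x y s)
       + (x s * x1 s + y s * y1 s) / (rr x y s * rr x y s)
           * (A1 s + B1 s * cos (2 * t) + D1 s * sin (2 * t))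
       + (A2 s + B2 s * cos (2 * t) + D2 s * sin (2 * t))).
Proof.
  intros S HG HA HA1 HB HB1 HD HD1 s t Hs.
  unfold lap.
  rewrite (in00_0 I x y x1 y1 x2 y2) by auto.
  rewrite (in00_1 I x y x1 y1 x2 y2) by auto.
  rewrite (in11_0 I x y x1 y1 x2 y2) by auto.
  rewrite (in11_1 I x y x1 y1 x2 y2) by auto.
  assert (E0 : forall v, Dir x y 0 (gauss_map x y) s v i =
     / rr x y s * (- 2 * B s * sin (2 * v) + 2 * D s * cos (2 * v))).
  { intros v. unfold Dir, dt. f_equal. apply Dv_eq.
    eapply Dext. intros w. apply HG; auto.
    eapply Deq. dauto. cbv beta. ring. }
  assert (E00 : Dir x y 0 (Dir x y 0 (gauss_map x y)) s t i =
     / rr x y s * (/ rr x y s * (- 4 * B s * cos (2 * t) - 4 * D s * sin (2 * t)))).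
  { unfold Dir at 1, dt. f_equal. apply Dv_eq.
    eapply Dext. intros w. apply E0.
    eapply Deq. dauto. cbv beta. ring. }
  assert (E1 : forall s', I s' -> Dir x y 1 (gauss_map x y) s' t i =
     A1 s' + B1 s' * cos (2 * t) + D1 s' * sin (2 * t)).
  { intros s' Hs'. unfold Dir, ds. apply Dv_eq.
    apply (Dloc _ (fun u => A u + B u * cos (2 * t) + D u * sin (2 * t))).
    - eapply loc_I; eauto.
    - eapply Deq. apply Dadd. apply Dadd. apply HA; auto. apply Dmul. apply HB; auto. apply Dconst.
      apply Dmul. apply HD; auto. apply Dconst. cbv beta; ring. }
  assert (E11 : Dir x y 1 (Dir x y 1 (gauss_map x y)) s t i =
     A2 s + B2 s * cos (2 * t) + D2 s * sin (2 * t)).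
  { unfold Dir at 1, ds. apply Dv_eq.
    apply (Dloc _ (fun u => A1 u + B1 u * cos (2 * t) + D1 u * sin (2 * t))).
    - eapply loc_I; eauto.
    - eapply Deq. apply Dadd. apply Dadd. apply HA1; auto. apply Dmul. apply HB1; auto. apply Dconst.
      apply Dmul. apply HD1; auto. apply Dconst. cbv beta; ring. }
  rewrite E00, E11, (E1 s Hs), E0.
  pose proof (rr_pos _ _ _ _ _ _ _ s S Hs).
  field. lra.
Qed.

Definition aF (x y x1 y1 : R -> R) s := (x s * x1 s + y s * y1 s) / rr x y s.
Definition qF (x y x1 y1 : R -> R) s := (x s * y1 s - y s * x1 s) / rr x y s.
Definition UF (x y x1 y1 : R -> R) s := (x s * x1 s - y s * y1 s) / rr x y s.
Definition VV (x y x1 y1 : R -> R) s := (x s * y1 s + y s * x1 s) / rr x y s.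

Definition HK (I : R -> Prop) (x y x1 y1 x2 y2 : R -> R) := forall s, I s ->
  (x s * x s + y s * y s) * (x1 s * y2 s - y1 s * x2 s) = x s * y1 s - y s * x1 s.

Ltac prepK I x y x1 y1 x2 y2 s S Hs HKs :=
  pose proof (rr_pos I x y x1 y1 x2 y2 s S Hs) as Hrp;
  pose proof (rr_sq I x y x1 y1 x2 y2 s S Hs) as Hr;
  pose proof (S_unit' I x y x1 y1 x2 y2 S s Hs) as Hu;
  pose proof (S_orth I x y x1 y1 x2 y2 S s Hs) as Ho;
  pose proof (S_pos' I x y x1 y1 x2 y2 S s Hs) as Hp;
  pose proof (HKs s Hs) as Hk;
  pose proof (kap_x2 _ _ _ _ Hu Ho) as Ex2; pose proof (kap_y2 _ _ _ _ Hu Ho) as Ey2;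
  set (r := rr x y s) in *;
  set (X := x s) in *; set (Y := y s) in *; set (X1 := x1 s) in *; set (Y1 := y1 s) in *;
  set (X2 := x2 s) in *; set (Y2 := y2 s) in *.

Ltac nsz := simpl pow;
  repeat match goal with v := _ |- _ => clearbody v end;
  repeat match goal with
  | H : dpl _ _ _ |- _ => clear H | H : Setup _ _ _ _ _ _ _ |- _ => clear H
  | H : HK _ _ _ _ _ _ _ |- _ => clear H | H : _ < _ |- _ => clear H
  | H : forall _, _ |- _ => clear H | H : _ <> _ |- _ => clear H end;
  nsatz.

Lemma da I x y x1 y1 x2 y2 s : Setup I x y x1 y1 x2 y2 -> HK I x y x1 y1 x2 y2 -> I s ->
  dpl (aF x y x1 y1) s 0.
Proof.
  intros S HKs Hs. unfold aF.
  pose proof (S_dx _ _ _ _ _ _ _ S s Hs). pose proof (S_dy _ _ _ _ _ _ _ S s Hs).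
  pose proof (S_dx1 _ _ _ _ _ _ _ S s Hs). pose proof (S_dy1 _ _ _ _ _ _ _ S s Hs).
  pose proof (drr _ _ _ _ _ _ _ s S Hs).
  pose proof (rr_pos I x y x1 y1 x2 y2 s S Hs).
  eapply Deq. apply Ddiv. dauto. eassumption. lra.
  unfold Rsqr. prepK I x y x1 y1 x2 y2 s S Hs HKs.
  field_simplify_eq; [nsz | lra ..].
Qed.

Lemma dq I x y x1 y1 x2 y2 s : Setup I x y x1 y1 x2 y2 -> HK I x y x1 y1 x2 y2 -> I s ->
  dpl (qF x y x1 y1) s 0.
Proof.
  intros S HKs Hs. unfold qF.
  pose proof (S_dx _ _ _ _ _ _ _ S s Hs). pose proof (S_dy _ _ _ _ _ _ _ S s Hs).
  pose proof (S_dx1 _ _ _ _ _ _ _ S s Hs). pose proof (S_dy1 _ _ _ _ _ _ _ S s Hs).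
  pose proof (drr _ _ _ _ _ _ _ s S Hs).
  pose proof (rr_pos I x y x1 y1 x2 y2 s S Hs).
  eapply Deq. apply Ddiv. dauto. eassumption. lra.
  unfold Rsqr. prepK I x y x1 y1 x2 y2 s S Hs HKs.
  field_simplify_eq; [nsz | lra ..].
Qed.

Lemma dU I x y x1 y1 x2 y2 s : Setup I x y x1 y1 x2 y2 -> HK I x y x1 y1 x2 y2 -> I s ->
  dpl (UF x y x1 y1) s (- 2 * qF x y x1 y1 s * VV x y x1 y1 s / rr x y s).
Proof.
  intros S HKs Hs. unfold UF, qF, VV.
  pose proof (S_dx _ _ _ _ _ _ _ S s Hs). pose proof (S_dy _ _ _ _ _ _ _ S s Hs).
  pose proof (S_dx1 _ _ _ _ _ _ _ S s Hs). pose proof (S_dy1 _ _ _ _ _ _ _ S s Hs).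
  pose proof (drr _ _ _ _ _ _ _ s S Hs).
  pose proof (rr_pos I x y x1 y1 x2 y2 s S Hs).
  eapply Deq. apply Ddiv. dauto. eassumption. lra.
  unfold Rsqr. prepK I x y x1 y1 x2 y2 s S Hs HKs.
  field_simplify_eq; [nsz | lra ..].
Qed.

Lemma dV I x y x1 y1 x2 y2 s : Setup I x y x1 y1 x2 y2 -> HK I x y x1 y1 x2 y2 -> I s ->
  dpl (VV x y x1 y1) s (2 * qF x y x1 y1 s * UF x y x1 y1 s / rr x y s).
Proof.
  intros S HKs Hs. unfold UF, qF, VV.
  pose proof (S_dx _ _ _ _ _ _ _ S s Hs). pose proof (S_dy _ _ _ _ _ _ _ S s Hs).
  pose proof (S_dx1 _ _ _ _ _ _ _ S s Hs). pose proof (S_dy1 _ _ _ _ _ _ _ S s Hs).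
  pose proof (drr _ _ _ _ _ _ _ s S Hs).
  pose proof (rr_pos I x y x1 y1 x2 y2 s S Hs).
  eapply Deq. apply Ddiv. dauto. eassumption. lra.
  unfold Rsqr. prepK I x y x1 y1 x2 y2 s S Hs HKs.
  field_simplify_eq; [nsz | lra ..].
Qed.

Lemma const_aq I x y x1 y1 x2 y2 : Setup I x y x1 y1 x2 y2 -> HK I x y x1 y1 x2 y2 ->
  exists a0 q0, (forall s, I s -> aF x y x1 y1 s = a0 /\ qF x y x1 y1 s = q0)
    /\ a0 * a0 + q0 * q0 = 1.
Proof.
  intros S HKs. destruct (S_int _ _ _ _ _ _ _ S) as [[s0 Hs0] _].
  exists (aF x y x1 y1 s0), (qF x y x1 y1 s0). split.
  - intros s Hs. split.
    + apply (const_on_I I _ (fun _ => 0)); auto. apply (S_int _ _ _ _ _ _ _ S).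
      intros; eapply da; eauto.
    + apply (const_on_I I _ (fun _ => 0)); auto. apply (S_int _ _ _ _ _ _ _ S).
      intros; eapply dq; eauto.
  - unfold aF, qF. pose proof (rr_pos I x y x1 y1 x2 y2 s0 S Hs0).
    prepK I x y x1 y1 x2 y2 s0 S Hs0 HKs.
    field_simplify_eq; [nsz | lra ..].
Qed.

Lemma UV1 I x y x1 y1 x2 y2 s : Setup I x y x1 y1 x2 y2 -> I s ->
  UF x y x1 y1 s * UF x y x1 y1 s + VV x y x1 y1 s * VV x y x1 y1 s = 1.
Proof.
  intros S Hs. unfold UF, VV.
  pose proof (rr_pos I x y x1 y1 x2 y2 s S Hs) as Hrp;
  pose proof (rr_sq I x y x1 y1 x2 y2 s S Hs) as Hr;
  pose proof (S_unit' I x y x1 y1 x2 y2 S s Hs) as Hu.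
  set (r := rr x y s) in *;
  set (X := x s) in *; set (Y := y s) in *; set (X1 := x1 s) in *; set (Y1 := y1 s) in *.
  field_simplify_eq; [ | lra].
  simpl pow; clearbody r X Y X1 Y1; clear - Hr Hu; nsatz.
Qed.

Definition Gform (a0 q0 U V : R) (i : nat) (t : R) : R :=
  match i with
  | 0%nat => - (a0 + U) / 2
  | 1%nat => - (q0 / 2) * sin (2 * t)
  | 2%nat => - V / 2 + q0 / 2 * cos (2 * t)
  | 3%nat => V / 2 + q0 / 2 * cos (2 * t)
  | 4%nat => q0 / 2 * sin (2 * t)
  | _ => - (a0 - U) / 2
  end.

Lemma G_eq I x y x1 y1 x2 y2 a0 q0 s t i : Setup I x y x1 y1 x2 y2 -> I s -> (i < 6)%nat ->
  aF x y x1 y1 s = a0 -> qF x y x1 y1 s = q0 ->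
  gauss_map x y s t i = Gform a0 q0 (UF x y x1 y1 s) (VV x y x1 y1 s) i t.
Proof.
  intros S Hs Hi Ha Hq. subst a0 q0. unfold gauss_map, wedge, aF, qF, UF, VV.
  pose proof (trig1 t) as Ht.
  destruct i as [|[|[|[|[|[|i]]]]]]; try lia; unfold Gform;
  repeat rewrite frame0_eq by lia;
  repeat rewrite (frame1_eq I x y x1 y1 x2 y2) by (auto; lia);
  simpl Xc; simpl Tc; simpl Td; rewrite ?cos_2a, ?sin_2a;
  pose proof (rr_pos I x y x1 y1 x2 y2 s S Hs) as Hrp;
  set (r := rr x y s) in *;
  set (X := x s) in *; set (Y := y s) in *; set (X1 := x1 s) in *; set (Y1 := y1 s) in *;
  set (C := cos t) in *; set (Sn := sin t) in *;
  field_simplify_eq; try lra;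
  simpl pow; clearbody r X Y X1 Y1 C Sn; clear - Ht; nsatz.
Qed.

Definition Lform (q0 U V r : R) (i : nat) (t : R) : R :=
  match i with
  | 0%nat => - 2 * q0 * q0 * U / (r * r)
  | 1%nat => - 2 * q0 * sin (2 * t) / (r * r)
  | 2%nat => (- 2 * q0 * q0 * V + 2 * q0 * cos (2 * t)) / (r * r)
  | 3%nat => (2 * q0 * q0 * V + 2 * q0 * cos (2 * t)) / (r * r)
  | 4%nat => 2 * q0 * sin (2 * t) / (r * r)
  | _ => 2 * q0 * q0 * U / (r * r)
  end.

Ltac dstep2 := first
  [ apply Dconst | apply Did | apply Dcosid | apply Dsinid
  | apply Ddiv | apply Dinv | apply Dmul | apply Dadd | apply Dsub | apply Dopp
  | apply Dpow2 | apply Dcos | apply Dsin ].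

Ltac dclose HU HV HUr HVr Hrp :=
  let s' := fresh "s" in let Hs' := fresh "Hs" in
  intros s' Hs'; pose proof (HU s' Hs'); pose proof (HV s' Hs'); pose proof (Hrp s' Hs');
  pose proof (HUr s' Hs'); pose proof (HVr s' Hs');
  eapply Deq; [repeat (first [eassumption | dstep2]); lra ..|]; cbv beta; unfold Rsqr; field; lra.

Lemma lap_eq I x y x1 y1 x2 y2 a0 q0 : Setup I x y x1 y1 x2 y2 -> HK I x y x1 y1 x2 y2 ->
  (forall s, I s -> aF x y x1 y1 s = a0 /\ qF x y x1 y1 s = q0) ->
  forall s t i, I s -> (i < 6)%nat ->
  lap x y (gauss_map x y) s t i =
  Lform q0 (UF x y x1 y1 s) (VV x y x1 y1 s) (rr x y s) i t.
Proof.
  intros S HKs Haq.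
  set (U := UF x y x1 y1). set (V := VV x y x1 y1). set (r := rr x y).
  assert (HU : forall s, I s -> dpl U s (- 2 * q0 * V s / r s)).
  { intros s Hs. destruct (Haq s Hs) as [_ Hq]. rewrite <- Hq. eapply dU; eauto. }
  assert (HV : forall s, I s -> dpl V s (2 * q0 * U s / r s)).
  { intros s Hs. destruct (Haq s Hs) as [_ Hq]. rewrite <- Hq. eapply dV; eauto. }
  assert (Hr : forall s, I s -> dpl r s a0).
  { intros s Hs. destruct (Haq s Hs) as [Ha _]. rewrite <- Ha. eapply drr; eauto. }
  assert (Hrp : forall s, I s -> 0 < r s).
  { intros s Hs. eapply rr_pos; eauto. }
  assert (HVr : forall s, I s -> dpl (fun s => q0 * V s / r s) s
                   (q0 * (2 * q0 * U s - a0 * V s) / (r s * r s))).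
  { intros s Hs. pose proof (HU s Hs). pose proof (HV s Hs). pose proof (Hr s Hs).
    pose proof (Hrp s Hs).
    eapply Deq. repeat (first [eassumption | dstep2]). lra. cbv beta. unfold Rsqr. field. lra. }
  assert (HUr : forall s, I s -> dpl (fun s => q0 * U s / r s) s
                   (q0 * (- 2 * q0 * V s - a0 * U s) / (r s * r s))).
  { intros s Hs. pose proof (HU s Hs). pose proof (HV s Hs). pose proof (Hr s Hs).
    pose proof (Hrp s Hs).
    eapply Deq. repeat (first [eassumption | dstep2]). lra. cbv beta. unfold Rsqr. field. lra. }
  assert (Z : forall s, I s -> dpl (fun _ : R => 0) s ((fun _ => 0) s)) by (intros; apply Dconst).
  intros s t i Hs Hi.
  destruct (Haq s Hs) as [Ha Hq].
  assert (Hau : (x s * x1 s + y s * y1 s) / (rr x y s * rr x y s) = a0 / r s).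
  { rewrite <- Ha. unfold aF. fold (r s). pose proof (Hrp s Hs). field. lra. }
  pose proof (Hrp s Hs) as Hrs.
  destruct i as [|[|[|[|[|[|i]]]]]]; try lia; simpl Lform.
  - rewrite (lap_gen I x y x1 y1 x2 y2 0 (fun s => - (a0 + U s) / 2) (fun s => q0 * V s / r s) (fun s => q0 * (2 * q0 * U s - a0 * V s) / (r s * r s))
      (fun _ => 0) (fun _ => 0) (fun _ => 0) (fun _ => 0) (fun _ => 0) (fun _ => 0) S); auto.
    1: rewrite Hau. change (rr x y s) with (r s). field. lra.
    1: intros s' t' Hs'. destruct (Haq s' Hs') as [Ha' Hq'].
      rewrite (G_eq I x y x1 y1 x2 y2 a0 q0 s' t' 0); auto. simpl. unfold U, V. field.
    all: dclose HU HV HUr HVr Hrp.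
  - rewrite (lap_gen I x y x1 y1 x2 y2 1 (fun _ => 0) (fun _ => 0) (fun _ => 0)
      (fun _ => 0) (fun _ => 0) (fun _ => 0) (fun _ => - (q0 / 2)) (fun _ => 0) (fun _ => 0) S); auto.
    1: rewrite Hau. change (rr x y s) with (r s). field. lra.
    1: intros s' t' Hs'. destruct (Haq s' Hs') as [Ha' Hq'].
      rewrite (G_eq I x y x1 y1 x2 y2 a0 q0 s' t' 1); auto. simpl. unfold U, V. field.
    all: dclose HU HV HUr HVr Hrp.
  - rewrite (lap_gen I x y x1 y1 x2 y2 2 (fun s => - V s / 2) (fun s => - (q0 * U s / r s)) (fun s => - (q0 * (- 2 * q0 * V s - a0 * U s) / (r s * r s)))
      (fun _ => q0 / 2) (fun _ => 0) (fun _ => 0) (fun _ => 0) (fun _ => 0) (fun _ => 0) S); auto.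
    1: rewrite Hau. change (rr x y s) with (r s). field. lra.
    1: intros s' t' Hs'. destruct (Haq s' Hs') as [Ha' Hq'].
      rewrite (G_eq I x y x1 y1 x2 y2 a0 q0 s' t' 2); auto. simpl. unfold U, V. field.
    all: dclose HU HV HUr HVr Hrp.
  - rewrite (lap_gen I x y x1 y1 x2 y2 3 (fun s => V s / 2) (fun s => q0 * U s / r s) (fun s => q0 * (- 2 * q0 * V s - a0 * U s) / (r s * r s))
      (fun _ => q0 / 2) (fun _ => 0) (fun _ => 0) (fun _ => 0) (fun _ => 0) (fun _ => 0) S); auto.
    1: rewrite Hau. change (rr x y s) with (r s). field. lra.
    1: intros s' t' Hs'. destruct (Haq s' Hs') as [Ha' Hq'].
      rewrite (G_eq I x y x1 y1 x2 y2 a0 q0 s' t' 3); auto. simpl. unfold U, V. field.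
    all: dclose HU HV HUr HVr Hrp.
  - rewrite (lap_gen I x y x1 y1 x2 y2 4 (fun _ => 0) (fun _ => 0) (fun _ => 0)
      (fun _ => 0) (fun _ => 0) (fun _ => 0) (fun _ => q0 / 2) (fun _ => 0) (fun _ => 0) S); auto.
    1: rewrite Hau. change (rr x y s) with (r s). field. lra.
    1: intros s' t' Hs'. destruct (Haq s' Hs') as [Ha' Hq'].
      rewrite (G_eq I x y x1 y1 x2 y2 a0 q0 s' t' 4); auto. simpl. unfold U, V. field.
    all: dclose HU HV HUr HVr Hrp.
  - rewrite (lap_gen I x y x1 y1 x2 y2 5 (fun s => - (a0 - U s) / 2) (fun s => - (q0 * V s / r s)) (fun s => - (q0 * (2 * q0 * U s - a0 * V s) / (r s * r s)))
      (fun _ => 0) (fun _ => 0) (fun _ => 0) (fun _ => 0) (fun _ => 0) (fun _ => 0) S); auto.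
    1: rewrite Hau. change (rr x y s) with (r s). field. lra.
    1: intros s' t' Hs'. destruct (Haq s' Hs') as [Ha' Hq'].
      rewrite (G_eq I x y x1 y1 x2 y2 a0 q0 s' t' 5); auto. simpl. unfold U, V. field.
    all: dclose HU HV HUr HVr Hrp.
Qed.

Lemma alg_fw (q0 a0 rho U V f0 f1 C0 C2 C3 C4 : R) :
 0 < rho -> q0 <> 0 -> a0*a0 + q0*q0 = 1 ->
 2*q0*1/rho = f1*(q0/2*1 + C4) ->
 (-2*q0*q0*V + 2*q0*0)/rho = f1*(-V/2 + q0/2*0 + C2) ->
 (2*q0*q0*V + 2*q0*0)/rho = f1*(V/2 + q0/2*0 + C3) ->
 (-2*q0*q0*V + 2*q0*1)/rho = f0*(-V/2 + q0/2*1 + C2) ->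
 (2*q0*q0*V + 2*q0*1)/rho = f0*(V/2 + q0/2*1 + C3) ->
 -2*q0*q0*U/rho = f0 * (-(a0+U)/2 + C0) ->
 a0*a0*V = 2*C2 /\ a0*a0*U = 2*C0 - a0.
Proof.
  intros Hr Hq Haq E4 E2 E3 F2 F3 F0.
  assert (Hf1 : f1 <> 0).
  { intro Z. rewrite Z in E4. assert (2 * q0 * 1 / rho = 0) by lra.
    unfold Rdiv in H. apply Rmult_integral in H. destruct H as [H|H]. lra.
    apply Rinv_neq_0_compat in H; lra. }
  assert (HC : C2 + C3 = 0).
  { assert (f1 * (C2 + C3) = 0).
    { replace (f1 * (C2 + C3)) with (f1*(-V/2 + q0/2*0 + C2) + f1*(V/2 + q0/2*0 + C3)) by field.
      rewrite <- E2, <- E3. field. lra. }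
    apply Rmult_integral in H. destruct H; [contradiction | lra]. }
  assert (Hf0 : f0 = 4 / rho).
  { assert (f0 * q0 = 4 * q0 / rho).
    { replace (f0 * q0) with (f0*(-V/2 + q0/2*1 + C2) + f0*(V/2 + q0/2*1 + C3)) by
        ((replace C3 with (-C2) by lra); field).
      rewrite <- F2, <- F3. field. lra. }
    apply (Rmult_eq_reg_r q0); auto. rewrite H. field. lra. }
  subst f0.
  assert (Hnz : 4 / rho <> 0) by (apply Rgt_not_eq; unfold Rdiv; apply Rmult_gt_0_compat; [lra| apply Rinv_0_lt_compat; lra]).
  assert (K1 : (V - 2*C2 - q0*q0*V) * (4/rho) = 0).
  { replace C3 with (-C2) in F3 by lra.
    replace ((V - 2*C2 - q0*q0*V)*(4/rho)) with ((4/rho)*(V/2 + q0/2*1 + -C2) - (4/rho)*(-V/2 + q0/2*1 + C2) - ((2*q0*q0*V + 2*q0*1)/rho - (-2*q0*q0*V + 2*q0*1)/rho)) by (field; lra).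
    rewrite <- F2, <- F3. ring. }
  assert (K2 : (a0 + U - 2*C0 - q0*q0*U) * (4/rho) = 0).
  { replace ((a0 + U - 2*C0 - q0*q0*U) * (4/rho)) with (-2*(4 / rho * (- (a0 + U) / 2 + C0)) + 2 * (-2*q0*q0*U/rho)) by (field; lra).
    rewrite <- F0. ring. }
  apply Rmult_integral in K1. apply Rmult_integral in K2.
  destruct K1 as [K1|K1]; [|contradiction]. destruct K2 as [K2|K2]; [|contradiction].
  replace (a0 * a0) with (1 - q0 * q0) by lra. split; lra.
Qed.

Lemma TG_of_q0 I x y x1 y1 x2 y2 : Setup I x y x1 y1 x2 y2 -> HK I x y x1 y1 x2 y2 ->
  (forall s, I s -> qF x y x1 y1 s = 0) -> totally_geodesic I x y.
Proof.
  intros S HKs Hq s t Hs k l i Hk Hl Hi.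
  pose proof (rr_pos I x y x1 y1 x2 y2 s S Hs) as Hrp.
  assert (W : x s * y1 s - y s * x1 s = 0).
  { pose proof (Hq s Hs) as H. unfold qF in H. unfold Rdiv in H.
    apply Rmult_integral in H. destruct H as [H|H]; auto.
    apply Rinv_neq_0_compat in H; lra. }
  pose proof (S_pos' _ _ _ _ _ _ _ S s Hs) as Hp.
  pose proof (S_unit' _ _ _ _ _ _ _ S s Hs) as Hu.
  pose proof (S_orth _ _ _ _ _ _ _ S s Hs) as Ho.
  assert (Kz : x1 s * y2 s - y1 s * x2 s = 0).
  { pose proof (HKs s Hs) as H. rewrite W in H. apply Rmult_integral in H. destruct H; auto; lra. }
  pose proof (kap_x2 _ _ _ _ Hu Ho) as Ex2. pose proof (kap_y2 _ _ _ _ Hu Ho) as Ey2.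
  rewrite Kz in Ex2, Ey2.
  assert (A1 : (x s * x1 s + y s * y1 s) * x1 s - x s = 0).
  { set (X := x s) in *; set (Y := y s) in *; set (X1 := x1 s) in *; set (Y1 := y1 s) in *.
    clearbody X Y X1 Y1. clear - W Hu. nsatz. }
  assert (A2 : (x s * x1 s + y s * y1 s) * y1 s - y s = 0).
  { set (X := x s) in *; set (Y := y s) in *; set (X1 := x1 s) in *; set (Y1 := y1 s) in *.
    clearbody X Y X1 Y1. clear - W Hu. nsatz. }
  assert (A3 : (x s * x s + y s * y s) * x1 s - (x s * x1 s + y s * y1 s) * x s = 0).
  { set (X := x s) in *; set (Y := y s) in *; set (X1 := x1 s) in *; set (Y1 := y1 s) in *.
    clearbody X Y X1 Y1. clear - W Hu. nsatz. }
  assert (A4 : (x s * x s + y s * y s) * y1 s - (x s * x1 s + y s * y1 s) * y s = 0).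
  { set (X := x s) in *; set (Y := y s) in *; set (X1 := x1 s) in *; set (Y1 := y1 s) in *.
    clearbody X Y X1 Y1. clear - W Hu. nsatz. }
  destruct k as [|[|k]]; try lia; destruct l as [|[|l]]; try lia.
  - rewrite (sff00_eq I x y x1 y1 x2 y2) by auto.
    destruct i as [|[|[|[|i]]]]; try lia; simpl Xc; rewrite ?A1, ?A2; unfold Rdiv; ring.
  - rewrite (sff01_eq I x y x1 y1 x2 y2) by auto.
    destruct i as [|[|[|[|i]]]]; try lia; simpl Xc; rewrite ?A3, ?A4; unfold Rdiv; ring.
  - rewrite (sff10_eq I x y x1 y1 x2 y2) by auto.
    destruct i as [|[|[|[|i]]]]; try lia; simpl Xc; rewrite ?A3, ?A4; unfold Rdiv; ring.
  - rewrite (sff11_eq I x y x1 y1 x2 y2) by auto.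
    destruct i as [|[|[|[|i]]]]; try lia; simpl Xc; rewrite ?Ex2, ?Ey2; ring.
Qed.

Lemma q0_of_TG I x y x1 y1 x2 y2 : Setup I x y x1 y1 x2 y2 ->
  totally_geodesic I x y -> forall s, I s -> qF x y x1 y1 s = 0.
Proof.
  intros S TG s Hs.
  pose proof (rr_pos I x y x1 y1 x2 y2 s S Hs) as Hrp.
  pose proof (TG s (PI/2) Hs 0%nat 1%nat 0%nat ltac:(lia) ltac:(lia) ltac:(lia)) as T0.
  pose proof (TG s (PI/2) Hs 0%nat 1%nat 2%nat ltac:(lia) ltac:(lia) ltac:(lia)) as T2.
  rewrite (sff01_eq I x y x1 y1 x2 y2) in T0, T2 by (auto; lia).
  simpl Xc in T0, T2. simpl Td in T0, T2. rewrite sin_PI2 in T0, T2.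
  assert (Hr3 : rr x y s * rr x y s * rr x y s <> 0) by (apply Rgt_not_eq; repeat apply Rmult_gt_0_compat; lra).
  assert (B0 : (x s * x s + y s * y s) * x1 s - (x s * x1 s + y s * y1 s) * x s = 0).
  { unfold Rdiv in T0. apply Rmult_integral in T0. destruct T0 as [T|T].
    - lra. - apply Rinv_neq_0_compat in T; [contradiction|auto]. }
  assert (B2 : (x s * x s + y s * y s) * y1 s - (x s * x1 s + y s * y1 s) * y s = 0).
  { unfold Rdiv in T2. apply Rmult_integral in T2. destruct T2 as [T|T].
    - lra. - apply Rinv_neq_0_compat in T; [contradiction|auto]. }
  pose proof (S_pos' _ _ _ _ _ _ _ S s Hs) as Hp.
  assert (W : (x s * y1 s - y s * x1 s) * (x s * x s + y s * y s) = 0).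
  { set (X := x s) in *; set (Y := y s) in *; set (X1 := x1 s) in *; set (Y1 := y1 s) in *.
    clearbody X Y X1 Y1. clear - B0 B2. nsatz. }
  apply Rmult_integral in W. destruct W as [W|W]; [|lra].
  unfold qF. rewrite W. unfold Rdiv. ring.
Qed.

Lemma smooth2_const (I : R -> Prop) c : smooth2 I (fun _ _ => c).
Proof.
  exists (fun i j => fun _ _ : R => match i, j with O, O => c | _, _ => 0 end).
  split; [reflexivity|]. intros i j s t Hs. split; [|split].
  - destruct i, j; apply Dconst.
  - destruct i, j; apply Dconst.
  - intros e He. exists 1. split; [lra|]. intros. rewrite Rminus_diag, Rabs_R0. exact He.
Qed.

Lemma polar c d : c * c + d * d = 1 -> exists th, cos th = c /\ sin th = d.
Proof.
  intros H.
  assert (Hc : -1 <= c <= 1) by nra.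
  assert (Hs : sqrt (1 - c²) = Rabs d).
  { replace (1 - c²) with (d²) by (unfold Rsqr; lra). apply sqrt_Rsqr_abs. }
  destruct (Rle_or_lt 0 d) as [Hd|Hd].
  - exists (acos c). split. apply cos_acos; auto. rewrite sin_acos; auto. rewrite Hs.
    apply Rabs_right; lra.
  - exists (- acos c). split. rewrite cos_neg. apply cos_acos; auto.
    rewrite sin_neg, sin_acos; auto. rewrite Hs. rewrite Rabs_left; lra.
Qed.

Lemma circle_ode (I : R -> Prop) x y x1 y1 x2 y2 b0 lam s0 :
  Setup I x y x1 y1 x2 y2 -> 0 < lam -> I s0 ->
  x s0 * x s0 + y s0 * y s0 = lam * lam ->
  (forall s, I s -> x1 s = - b0 * y s /\ y1 s = b0 * x s) ->
  exists d, forall s, I s -> x s = lam * cos (b0 * s + d) /\ y s = lam * sin (b0 * s + d).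
Proof.
  intros S Hl Hs0 Hr Hode.
  destruct (polar (x s0 / lam) (y s0 / lam)) as [th [Hc Hsn]].
  { field_simplify_eq; [|lra]. lra. }
  exists (th - b0 * s0).
  set (E := fun s => (x s - lam * cos (b0 * s + (th - b0 * s0))) ^ 2
                   + (y s - lam * sin (b0 * s + (th - b0 * s0))) ^ 2).
  assert (HE : forall s, I s -> dpl E s 0).
  { intros s Hs. unfold E. pose proof (S_dx _ _ _ _ _ _ _ S s Hs). pose proof (S_dy _ _ _ _ _ _ _ S s Hs).
    destruct (Hode s Hs) as [H1 H2].
    eapply Deq. dauto. cbv beta. rewrite H1, H2. ring. }
  assert (E0 : E s0 = 0).
  { unfold E. replace (b0 * s0 + (th - b0 * s0)) with th by ring. rewrite Hc, Hsn.
    field_simplify_eq; lra. }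
  intros s Hs.
  assert (Es : E s = 0).
  { rewrite <- E0. apply (const_on_I I E (fun _ => 0)); auto. apply (S_int _ _ _ _ _ _ _ S). }
  unfold E in Es. simpl in Es. rewrite !Rmult_1_r in Es.
  pose proof (Rplus_sqr_eq_0_l _ _ Es) as A1.
  rewrite Rplus_comm in Es. pose proof (Rplus_sqr_eq_0_l _ _ Es) as A2. split; lra.
Qed.

Theorem theorem1 (I : R -> Prop) (x y : R -> R) :
  is_open_interval I ->
  smooth1 I x -> smooth1 I y ->
  (forall s, I s -> Dv x s ^ 2 + Dv y s ^ 2 = 1) ->
  (forall s, I s -> 0 < x s ^ 2 + y s ^ 2) ->
  (forall s t, I s -> gauss_curv x y s t = 0) ->
  (pointwise_1type I x y <->
    (totally_geodesic I x y \/
     exists b0 lam d : R, b0 ^ 2 * lam ^ 2 = 1 /\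
       forall s t, I s ->
         rotsurf x y s t =
         rotsurf (fun u => lam * cos (b0 * u + d))
                 (fun u => lam * sin (b0 * u + d)) s t)).
Proof.
  intros Hint [Fx [Fx0 HFx]] [Fy [Fy0 HFy]] Hunit Hpos Hflat.
  set (x1 := Fx 1%nat). set (x2 := Fx 2%nat). set (y1 := Fy 1%nat). set (y2 := Fy 2%nat).
  assert (Hdx : forall s, I s -> dpl x s (x1 s)).
  { intros s Hs. rewrite <- Fx0. apply HFx; auto. }
  assert (Hdy : forall s, I s -> dpl y s (y1 s)).
  { intros s Hs. rewrite <- Fy0. apply HFy; auto. }
  assert (S : Setup I x y x1 y1 x2 y2).
  { constructor; auto.
    - intros s Hs. apply HFx; auto.
    - intros s Hs. apply HFy; auto.
    - intros s Hs. rewrite <- (Dv_eq _ _ _ (Hdx s Hs)), <- (Dv_eq _ _ _ (Hdy s Hs)). auto. }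
  clearbody x1 x2 y1 y2.
  assert (HKs : HK I x y x1 y1 x2 y2).
  { intros s Hs. apply (Hkappa I x y x1 y1 x2 y2 S); auto. }
  destruct (const_aq I x y x1 y1 x2 y2 S HKs) as [a0 [q0 [Haq Haq1]]].
  pose proof (lap_eq I x y x1 y1 x2 y2 a0 q0 S HKs Haq) as HL.
  assert (HG : forall s t i, I s -> (i < 6)%nat ->
     gauss_map x y s t i = Gform a0 q0 (UF x y x1 y1 s) (VV x y x1 y1 s) i t).
  { intros s t i Hs Hi. destruct (Haq s Hs). eapply G_eq; eauto. }
  destruct Hint as [[s0 Hs0] Hint2].
  split.
  - intros [f [C [_ Heq]]].
    destruct (Req_dec q0 0) as [Hq0|Hq0].
    + left. apply (TG_of_q0 I x y x1 y1 x2 y2 S HKs).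
      intros s Hs. rewrite (proj2 (Haq s Hs)). auto.
    + right.
      assert (Ha0 : a0 = 0).
      { destruct (Req_dec a0 0) as [|Ha0]; auto. exfalso.
        assert (K : forall s, I s -> a0 * a0 * VV x y x1 y1 s = 2 * C 2%nat /\
                                   a0 * a0 * UF x y x1 y1 s = 2 * C 0%nat - a0).
        { intros s Hs.
          pose proof (rr_pos I x y x1 y1 x2 y2 s S Hs) as Hrp.
          assert (Sp : sin (2 * (PI / 4)) = 1) by (replace (2 * (PI / 4)) with (PI / 2) by field; apply sin_PI2).
          assert (Cp : cos (2 * (PI / 4)) = 0) by (replace (2 * (PI / 4)) with (PI / 2) by field; apply cos_PI2).
          assert (S0 : sin (2 * 0) = 0) by (rewrite Rmult_0_r; apply sin_0).
          assert (C0' : cos (2 * 0) = 1) by (rewrite Rmult_0_r; apply cos_0).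
          pose proof (Heq s (PI/4) Hs 4%nat ltac:(lia)) as E4.
          pose proof (Heq s (PI/4) Hs 2%nat ltac:(lia)) as E2.
          pose proof (Heq s (PI/4) Hs 3%nat ltac:(lia)) as E3.
          pose proof (Heq s 0 Hs 2%nat ltac:(lia)) as F2.
          pose proof (Heq s 0 Hs 3%nat ltac:(lia)) as F3.
          pose proof (Heq s 0 Hs 0%nat ltac:(lia)) as F0.
          rewrite HL, HG in E4, E2, E3, F2, F3, F0 by (auto; lia).
          simpl Lform in E4, E2, E3, F2, F3, F0. simpl Gform in E4, E2, E3, F2, F3, F0.
          rewrite Sp in E4. rewrite Cp in E2, E3. rewrite C0' in F2, F3.
          assert (Hrho : 0 < rr x y s * rr x y s) by (apply Rmult_gt_0_compat; lra).
          exact (alg_fw q0 a0 _ _ _ _ _ _ _ _ _ Hrho Hq0 Haq1 E4 E2 E3 F2 F3 F0). }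
        assert (HU : forall s, I s -> dpl (UF x y x1 y1) s (- 2 * q0 * VV x y x1 y1 s / rr x y s)).
        { intros s Hs. destruct (Haq s Hs) as [_ Hq]. rewrite <- Hq. eapply dU; eauto. }
        assert (HV : forall s, I s -> dpl (VV x y x1 y1) s (2 * q0 * UF x y x1 y1 s / rr x y s)).
        { intros s Hs. destruct (Haq s Hs) as [_ Hq]. rewrite <- Hq. eapply dV; eauto. }
        assert (Vz : forall s, I s -> VV x y x1 y1 s = 0).
        { intros s Hs. pose proof (rr_pos I x y x1 y1 x2 y2 s S Hs) as Hrp.
          assert (D0 : dpl (UF x y x1 y1) s 0).
          { apply (Dloc _ (fun _ => (2 * C 0%nat - a0) / (a0 * a0))).
            - eapply loc_I; eauto. intros u Hu. destruct (K u Hu) as [_ K2].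
              rewrite <- K2. field. auto.
            - apply Dconst. }
          pose proof (uniqueness_limite _ _ _ _ (HU s Hs) D0) as Z.
          assert (Z2 : q0 * VV x y x1 y1 s = 0).
          { apply (Rmult_eq_reg_r (-2 / rr x y s)). rewrite Rmult_0_l. rewrite <- Z. field. lra.
            unfold Rdiv; apply Rmult_integral_contrapositive; split; [lra | apply Rinv_neq_0_compat; lra]. }
          apply Rmult_integral in Z2. destruct Z2; [contradiction|auto]. }
        assert (Uz : UF x y x1 y1 s0 = 0).
        { pose proof (rr_pos I x y x1 y1 x2 y2 s0 S Hs0) as Hrp.
          assert (D0 : dpl (VV x y x1 y1) s0 0).
          { apply (Dloc _ (fun _ => 0)).
            - eapply loc_I; eauto.
            - apply Dconst. }
          pose proof (uniqueness_limite _ _ _ _ (HV s0 Hs0) D0) as Z.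
          assert (Z2 : q0 * UF x y x1 y1 s0 = 0).
          { apply (Rmult_eq_reg_r (2 / rr x y s0)). rewrite Rmult_0_l. rewrite <- Z. field. lra.
            unfold Rdiv; apply Rmult_integral_contrapositive; split; [lra | apply Rinv_neq_0_compat; lra]. }
          apply Rmult_integral in Z2. destruct Z2; [contradiction|auto]. }
        pose proof (UV1 I x y x1 y1 x2 y2 s0 S Hs0) as UV. rewrite Uz, (Vz s0 Hs0) in UV. lra. }
      subst a0.
      assert (Hrc : forall s, I s -> rr x y s = rr x y s0).
      { intros s Hs. apply (const_on_I I (rr x y) (fun _ => 0)); auto.
        - split; [exists s0; auto| auto].
        - intros u Hu. destruct (Haq u Hu) as [Ha _]. rewrite <- Ha. eapply drr; eauto. }
      set (lam := rr x y s0).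
      assert (Hlam : 0 < lam) by (eapply rr_pos; eauto).
      destruct (circle_ode I x y x1 y1 x2 y2 (q0 / lam) lam s0 S Hlam Hs0) as [d Hd].
      { symmetry. eapply rr_sq; eauto. }
      { intros s Hs. destruct (Haq s Hs) as [Ha Hq]. unfold aF, qF in Ha, Hq.
        rewrite Hrc in Ha, Hq by auto. fold lam in Ha, Hq.
        pose proof (rr_sq I x y x1 y1 x2 y2 s S Hs) as Hr. rewrite Hrc in Hr by auto. fold lam in Hr.
        subst q0. split; field_simplify_eq; try lra;
        field_simplify_eq in Ha; try lra;
        set (X := x s) in *; set (Y := y s) in *; set (X1 := x1 s) in *; set (Y1 := y1 s) in *;
        clearbody X Y X1 Y1 lam; clear - Ha Hr; simpl pow; nsatz. }
      exists (q0 / lam), lam, d. split.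
      { field_simplify_eq; [|lra]. lra. }
      intros s t Hs. extensionality i. destruct (Hd s Hs) as [Ex Ey].
      destruct i as [|[|[|[|i]]]]; simpl; rewrite ?Ex, ?Ey; reflexivity.
  - intros [TG | [b0 [lam [d [Hbl Hrot]]]]].
    + assert (q0 = 0).
      { rewrite <- (proj2 (Haq s0 Hs0)). eapply q0_of_TG; eauto. }
      subst q0.
      exists (fun _ _ => 0), (fun _ => 0). split. apply smooth2_const.
      intros s t Hs i Hi. rewrite HL by auto.
      destruct i as [|[|[|[|[|[|i]]]]]]; try lia; simpl Lform; unfold Rdiv; ring.
    + assert (Hx : forall s, I s -> x s = lam * cos (b0 * s + d)).
      { intros s Hs. pose proof (f_equal (fun v => v 0%nat) (Hrot s 0 Hs)) as H. simpl in H.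
        rewrite cos_0 in H. lra. }
      assert (Hy : forall s, I s -> y s = lam * sin (b0 * s + d)).
      { intros s Hs. pose proof (f_equal (fun v => v 2%nat) (Hrot s 0 Hs)) as H. simpl in H.
        rewrite cos_0 in H. lra. }
      assert (Hx1 : forall s, I s -> x1 s = - sin (b0 * s + d) * b0 * lam).
      { intros s Hs. apply (uniqueness_limite x s). apply Hdx; auto.
        apply (Dloc _ (fun u => lam * cos (b0 * u + d))).
        - eapply loc_I; eauto.
        - eapply Deq. dauto. cbv beta. ring. }
      assert (Hy1 : forall s, I s -> y1 s = cos (b0 * s + d) * b0 * lam).
      { intros s Hs. apply (uniqueness_limite y s). apply Hdy; auto.
        apply (Dloc _ (fun u => lam * sin (b0 * u + d))).
        - eapply loc_I; eauto.
        - eapply Deq. dauto. cbv beta. ring. }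
      assert (a0 = 0).
      { destruct (Haq s0 Hs0) as [Ha _]. rewrite <- Ha. unfold aF.
        rewrite Hx, Hy, Hx1, Hy1 by auto. unfold Rdiv. ring. }
      subst a0.
      assert (Hq2 : q0 * q0 = 1) by lra.
      assert (Hlam : lam * lam <> 0).
      { intro Z. assert (b0 ^ 2 * lam ^ 2 = 0) by (simpl; rewrite Rmult_1_r, Rmult_1_r;
          replace (b0 * b0 * (lam * lam)) with (b0 * b0 * 0) by (rewrite Z; ring); ring). lra. }
      exists (fun _ _ => 4 / (lam * lam)), (fun _ => 0). split. apply smooth2_const.
      intros s t Hs i Hi.
      assert (Hrr : rr x y s * rr x y s = lam * lam).
      { rewrite (rr_sq I x y x1 y1 x2 y2 s S Hs), Hx, Hy by auto.
        pose proof (trig1 (b0 * s + d)). nra. }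
      rewrite HL, HG by auto.
      destruct i as [|[|[|[|[|[|i]]]]]]; try lia; simpl Lform; simpl Gform; rewrite Hrr;
      (field_simplify_eq; [
      set (U := UF x y x1 y1 s) in *; set (V := VV x y x1 y1 s) in *;
      clearbody U V; clear - Hq2; simpl pow; nsatz | ..]).
      all: try auto; try (intro Zl; apply Hlam; rewrite Zl; ring).
Qed.
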